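(* Let $\mathsf{F}(X)=X+(X\times X)$ and $\mathsf{B}(X)=\mathcal{P}(X)$ be the interaction and observation functors. Then $\mathsf{F}$ and $\mathsf{B}$ preserve monomorphisms whose domain is the empty set, and $\mathsf{F}$ preserves wide (small) pushouts of epimorphisms. Consequently $\mathit{Dialg}(\mathsf{F},\mathsf{B})$ has (unique up to isomorphism) factorisations of every homomorphism into a homomorphism with surjective underlying function followed by one with injective underlying function, and every $(\mathsf{F},\mathsf{B})$-dialgebra has a bisimilarity quotient.
   Context: For functors $\mathsf{F},\mathsf{B}:\mathbf{Set}\to\mathbf{Set}$, an $(\mathsf{F},\mathsf{B})$-dialgebra is a pair $(X,f)$ with $X$ a set and $f:\mathsf{F}X\to\mathsf{B}X$ a function; a homomorphism $h:(X,f)\to(Y,g)$ is a function $h:X\to Y$ with $g\circ\mathsf{F}h=\mathsf{B}h\circ f$; these form $\mathit{Dialg}(\mathsf{F},\mathsf{B})$. The interaction functor is $\mathsf{F}(X)=X+(X\times X)$ with $\mathsf{F}h(x)=h(x)$ on the left summand and $\mathsf{F}h(x,y)=(h(x),h(y))$ on the right summand; the observation functor is the covariant powerset $\mathsf{B}(X)=\mathcal{P}(X)$ with $\mathsf{B}h(S)=h[S]$. A quotient of an object $A$ in a category is a chosen representative of an equivalence class of epimorphisms out of $A$ modulo postcomposition with isomorphisms. The bisimilarity quotient of $(X,f)$ is the wide pushout in $\mathit{Dialg}(\mathsf{F},\mathsf{B})$ (if it exists) of the family of all quotients of $(X,f)$. *)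

(* Defs.v *)
From Stdlib Require Import ClassicalEpsilon FunctionalExtensionality PropExtensionality.

Definition F (X : Type) : Type := (X + (X * X))%type.
Definition Fmap {X Y : Type} (h : X -> Y) (u : F X) : F Y :=
  match u with
  | inl x => inl (h x)
  | inr (x, y) => inr (h x, h y)
  end.

Definition B (X : Type) : Type := X -> Prop.
Definition Bmap {X Y : Type} (h : X -> Y) (S : B X) : B Y :=
  fun y => exists x, S x /\ h x = y.

(* Monomorphisms / epimorphisms in Set (categorical definitions,
   morphism equality = pointwise equality). *)
Definition set_mono {X Y : Type} (m : X -> Y) : Prop :=
  forall (Z : Type) (u v : Z -> X),
    (forall z, m (u z) = m (v z)) -> forall z, u z = v z.
Definition set_epi {X Y : Type} (e : X -> Y) : Prop :=
  forall (Z : Type) (u v : Y -> Z),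
    (forall x, u (e x) = v (e x)) -> forall y, u y = v y.

Definition set_cocone {I X : Type} {Y : I -> Type} (e : forall i, X -> Y i)
  (P : Type) (p : X -> P) (c : forall i, Y i -> P) : Prop :=
  forall i x, c i (e i x) = p x.

Definition set_wide_pushout {I X : Type} {Y : I -> Type} (e : forall i, X -> Y i)
  (P : Type) (p : X -> P) (c : forall i, Y i -> P) : Prop :=
  set_cocone e P p c /\
  forall (Q : Type) (q : X -> Q) (d : forall i, Y i -> Q),
    set_cocone e Q q d ->
    exists u : P -> Q,
      (forall x, u (p x) = q x) /\ (forall i y, u (c i y) = d i y) /\
      forall u' : P -> Q,
        (forall x, u' (p x) = q x) -> (forall i y, u' (c i y) = d i y) ->
        forall z, u' z = u z.

Record dialg := Dialg { car : Type; str : F car -> B car }.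

Definition is_hom (D E : dialg) (h : car D -> car E) : Prop :=
  forall u, str E (Fmap h u) = Bmap h (str D u).

Definition hom (D E : dialg) : Type := {h : car D -> car E | is_hom D E h}.
Definition hfun {D E : dialg} (h : hom D E) : car D -> car E := proj1_sig h.

Definition dialg_epi {D E : dialg} (e : hom D E) : Prop :=
  forall (Z : dialg) (u v : hom E Z),
    (forall x, hfun u (hfun e x) = hfun v (hfun e x)) ->
    forall y, hfun u y = hfun v y.

Definition dialg_iso {D E : dialg} (i : hom D E) : Prop :=
  exists j : hom E D,
    (forall x, hfun j (hfun i x) = x) /\ (forall y, hfun i (hfun j y) = y).

Definition dialg_cocone {I : Type} {D : dialg} {Y : I -> dialg}
  (e : forall i, hom D (Y i)) (P : dialg) (p : hom D P) (c : forall i, hom (Y i) P)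
  : Prop :=
  forall i x, hfun (c i) (hfun (e i) x) = hfun p x.

Definition dialg_wide_pushout {I : Type} {D : dialg} {Y : I -> dialg}
  (e : forall i, hom D (Y i)) (P : dialg) (p : hom D P) (c : forall i, hom (Y i) P)
  : Prop :=
  dialg_cocone e P p c /\
  forall (Q : dialg) (q : hom D Q) (d : forall i, hom (Y i) Q),
    dialg_cocone e Q q d ->
    exists u : hom P Q,
      (forall x, hfun u (hfun p x) = hfun q x) /\
      (forall i y, hfun u (hfun (c i) y) = hfun (d i) y) /\
      forall u' : hom P Q,
        (forall x, hfun u' (hfun p x) = hfun q x) ->
        (forall i y, hfun u' (hfun (c i) y) = hfun (d i) y) ->
        forall z, hfun u' z = hfun u z.

Definition epi_out (D : dialg) : Type :=
  {E : dialg & {e : hom D E | dialg_epi e}}.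
Definition epi_tgt {D : dialg} (s : epi_out D) : dialg := projT1 s.
Definition epi_map {D : dialg} (s : epi_out D) : hom D (epi_tgt s) :=
  proj1_sig (projT2 s).

Definition epi_equiv (D : dialg) (s t : epi_out D) : Prop :=
  exists i : hom (epi_tgt s) (epi_tgt t),
    dialg_iso i /\ forall x, hfun i (hfun (epi_map s) x) = hfun (epi_map t) x.

Definition quotient_class (D : dialg) : Type :=
  {C : epi_out D -> Prop | exists r, C r /\ forall s, C s <-> epi_equiv D r s}.

Definition quotient_class_inhabited (D : dialg) (C : quotient_class D) :
  exists s, proj1_sig C s :=
  match proj2_sig C with ex_intro _ r (conj Hr _) => ex_intro _ r Hr end.

(* The quotient = chosen representative of a class *)
Definition quotient_rep (D : dialg) (C : quotient_class D) : epi_out D :=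
  proj1_sig (constructive_indefinite_description _ (quotient_class_inhabited D C)).

Definition is_bisim_quotient (D : dialg) (P : dialg) (p : hom D P)
  (c : forall C : quotient_class D, hom (epi_tgt (quotient_rep D C)) P) : Prop :=
  dialg_wide_pushout (fun C => epi_map (quotient_rep D C)) P p c.

Definition has_bisim_quotient (D : dialg) : Prop :=
  exists (P : dialg) (p : hom D P)
         (c : forall C : quotient_class D, hom (epi_tgt (quotient_rep D C)) P),
    is_bisim_quotient D P p c.

(* Main.v *)
Require Import Defs.
From Stdlib Require Import ClassicalEpsilon FunctionalExtensionality PropExtensionality ProofIrrelevance.

Lemma Fmap_comp {X Y Z} (f : X -> Y) (g : Y -> Z) u :
  Fmap g (Fmap f u) = Fmap (fun x => g (f x)) u.
Proof. destruct u as [x|[x y]]; reflexivity. Qed.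

Lemma Fmap_ext {X Y} (f g : X -> Y) u : (forall x, f x = g x) -> Fmap f u = Fmap g u.
Proof. intros H; destruct u as [x|[x y]]; simpl; rewrite ?H; reflexivity. Qed.

Lemma Bmap_comp {X Y Z} (f : X -> Y) (g : Y -> Z) S :
  Bmap g (Bmap f S) = Bmap (fun x => g (f x)) S.
Proof.
  apply functional_extensionality; intro z; apply propositional_extensionality; unfold Bmap; split.
  - intros [y [[x [Hx <-]] <-]]; eauto.
  - intros [x [Hx <-]]; eauto.
Qed.

Lemma Bmap_ext_on {X Y} (f g : X -> Y) S :
  (forall x, S x -> f x = g x) -> Bmap f S = Bmap g S.
Proof.
  intros H; apply functional_extensionality; intro z; apply propositional_extensionality; unfold Bmap; split;
  intros [x [Hx <-]]; exists x; split; auto; rewrite H; auto.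
Qed.

Lemma Bmap_ext {X Y} (f g : X -> Y) S : (forall x, f x = g x) -> Bmap f S = Bmap g S.
Proof. intros H; apply Bmap_ext_on; auto. Qed.

Lemma Fmap_surj {X Y} (f : X -> Y) : (forall y, exists x, f x = y) -> forall w, exists u, Fmap f u = w.
Proof.
  intros H [y|[y1 y2]].
  - destruct (H y) as [x <-]; exists (inl x); reflexivity.
  - destruct (H y1) as [x1 <-]; destruct (H y2) as [x2 <-]; exists (inr (x1,x2)); reflexivity.
Qed.

Lemma Fmap_inj {X Y} (f : X -> Y) : (forall a b, f a = f b -> a = b) -> forall u v, Fmap f u = Fmap f v -> u = v.
Proof.
  intros H [x|[x1 x2]] [y|[y1 y2]]; simpl; intro E; try discriminate; injection E; intros.
  - f_equal; auto.
  - f_equal; f_equal; auto.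
Qed.

Lemma Bmap_inj {X Y} (f : X -> Y) : (forall a b, f a = f b -> a = b) -> forall S T, Bmap f S = Bmap f T -> S = T.
Proof.
  intros Hf S T E. apply functional_extensionality; intro x; apply propositional_extensionality; split; intro H.
  - assert (H' : Bmap f T (f x)) by (rewrite <- E; exists x; auto).
    destruct H' as [y [Hy Ey]]. rewrite <- (Hf _ _ Ey); auto.
  - assert (H' : Bmap f S (f x)) by (rewrite E; exists x; auto).
    destruct H' as [y [Hy Ey]]. rewrite <- (Hf _ _ Ey); auto.
Qed.

Lemma hom_eq (D E : dialg) (h : hom D E) u : str E (Fmap (hfun h) u) = Bmap (hfun h) (str D u).
Proof. exact (proj2_sig h u). Qed.

Lemma epi_surj {X Y} (e : X -> Y) : set_epi e -> forall y, exists x, e x = y.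
Proof.
  intros H y.
  assert (E' : (exists x, e x = y) = True).
  { apply (H Prop (fun y => exists x, e x = y) (fun _ => True)).
    intro x. apply propositional_extensionality; split; eauto. }
  rewrite E'; exact I.
Qed.

Lemma part1 X Y (m : X -> Y) : (X -> False) -> set_mono m -> set_mono (Fmap m) /\ set_mono (Bmap m).
Proof.
  intros HX _. split.
  - intros Z u v Hz z. exfalso. destruct (u z) as [x|[x y]]; exact (HX x).
  - intros Z u v Hz z. apply functional_extensionality; intro x; destruct (HX x).
Qed.

Lemma wpo_surj {I X} {Y : I -> Type} (e : forall i, X -> Y i) P p c :
  (forall i y, exists x, e i x = y) -> set_wide_pushout e P p c -> forall z, exists x, p x = z.
Proof.
  intros He [Hc Hu] z.
  destruct (Hu Prop (fun _ => True) (fun _ _ => True) (fun _ _ => eq_refl)) as [u [_ [_ Hun]]].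
  assert (A : (exists x, p x = z) = u z).
  { apply (Hun (fun z => exists x, p x = z)).
    - intro x. apply propositional_extensionality; split; eauto.
    - intros i y. destruct (He i y) as [x <-]. rewrite Hc. apply propositional_extensionality; split; eauto. }
  assert (B' : True = u z) by (apply (Hun (fun _ => True)); auto).
  rewrite A, <- B'; trivial.
Qed.

Lemma part2 I X (Y : I -> Type) (e : forall i, X -> Y i) :
  (forall i, set_epi (e i)) -> forall P p c, set_wide_pushout e P p c ->
  set_wide_pushout (fun i => Fmap (e i)) (F P) (Fmap p) (fun i => Fmap (c i)).
Proof.
  intros Hepi P p c Hwp.
  assert (He : forall i y, exists x, e i x = y) by (intros i; apply epi_surj, Hepi).
  assert (Hp := wpo_surj e P p c He Hwp).
  destruct Hwp as [Hc Hu].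
  split.
  - intros i [x|[x y]]; simpl; rewrite ?Hc; reflexivity.
  - intros Q q d Hd.
    destruct (Hu Q (fun x => q (inl x)) (fun i y => d i (inl y))) as [u1 [Hu1p _]].
    { intros i x. exact (Hd i (inl x)). }
    assert (Ga : forall a, exists g : P -> Q, forall x, g (p x) = q (inr (a, x))).
    { intro a. destruct (Hu Q (fun x => q (inr (a,x))) (fun i y => d i (inr (e i a, y)))) as [g [Hg _]].
      { intros i x. exact (Hd i (inr (a,x))). }
      exists g; exact Hg. }
    pose (G := fun a => proj1_sig (constructive_indefinite_description _ (Ga a))).
    assert (HG : forall a x, G a (p x) = q (inr (a,x)))
      by (intro a; exact (proj2_sig (constructive_indefinite_description _ (Ga a)))).
    assert (HGe : forall i a a', e i a = e i a' -> G a = G a').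
    { intros i a a' E. apply functional_extensionality; intro z. destruct (Hp z) as [x <-].
      rewrite !HG. rewrite <- (Hd i (inr (a,x))), <- (Hd i (inr (a',x))). simpl. rewrite E. reflexivity. }
    pose (H := fun i y => G (proj1_sig (constructive_indefinite_description _ (He i y)))).
    destruct (Hu (P -> Q) G H) as [U [HUp _]].
    { intros i x. unfold H. destruct (constructive_indefinite_description _ (He i (e i x))) as [x' Ex']; simpl.
      apply (HGe i). exact Ex'. }
    exists (fun w : F P => match w with inl z => u1 z | inr (z1, z2) => U z1 z2 end).
    split; [|split].
    + intros [x|[a b]]; simpl; [apply Hu1p|]. rewrite HUp, HG. reflexivity.
    + intros i [y|[y1 y2]]; simpl.
      * destruct (He i y) as [x <-]. rewrite Hc, Hu1p. symmetry; exact (Hd i (inl x)).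
      * destruct (He i y1) as [x1 <-]; destruct (He i y2) as [x2 <-]. rewrite !Hc, HUp, HG.
        symmetry; exact (Hd i (inr (x1,x2))).
    + intros u' Hu'p _ w. destruct (Fmap_surj p Hp w) as [w0 <-]. rewrite Hu'p.
      destruct w0 as [x|[a b]]; simpl; [symmetry; apply Hu1p|]. rewrite HUp, HG; reflexivity.
Qed.

Definition img (D E : dialg) (h : hom D E) : dialg :=
  Dialg {y : car E | exists x, hfun h x = y}
        (fun w z => str E (Fmap (@proj1_sig _ _) w) (proj1_sig z)).

Lemma part3 (D E : dialg) (h : hom D E) :
  exists (M : dialg) (e : hom D M) (m : hom M E),
    (forall y, exists x, hfun e x = y) /\
    (forall a b, hfun m a = hfun m b -> a = b) /\
    (forall x, hfun m (hfun e x) = hfun h x).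
Proof.
  pose (ef := fun x => exist (fun y => exists x, hfun h x = y) (hfun h x) (ex_intro _ x eq_refl)
               : car (img D E h)).
  assert (Hefs : forall y, exists x, ef x = y).
  { intros [y [x Hx]]. exists x. unfold ef. subst y. reflexivity. }
  assert (He : is_hom D (img D E h) ef).
  { intro u. simpl. rewrite Fmap_comp. unfold ef; simpl. rewrite (hom_eq _ _ h).
    apply functional_extensionality; intros [y py]; apply propositional_extensionality; simpl; split.
    - intros [x [Hx Ex]]. exists x; split; auto. subst y. f_equal. apply proof_irrelevance.
    - intros [x [Hx Ex]]. exists x; split; auto. injection Ex; auto. }
  assert (Hm : is_hom (img D E h) E (@proj1_sig _ _)).
  { intro w. simpl. apply functional_extensionality; intro t; apply propositional_extensionality; split.
    - intro Ht. destruct (Fmap_surj ef Hefs w) as [u <-].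
      assert (Ht' := Ht). rewrite Fmap_comp in Ht'. simpl in Ht'. rewrite (hom_eq _ _ h) in Ht'.
      destruct Ht' as [x [_ Hx]].
      exists (exist _ t (ex_intro _ x Hx)). simpl. split; auto.
    - intros [z [Hz <-]]. exact Hz. }
  exists (img D E h), (exist _ ef He), (exist _ _ Hm). simpl. split; [|split].
  - exact Hefs.
  - intros [a pa] [b pb]; simpl; intro; subst; f_equal; apply proof_irrelevance.
  - reflexivity.
Qed.

Lemma hom_of_inj (M M' E : dialg) (m : hom M E) (m' : hom M' E) (i : car M -> car M') :
  (forall a b, hfun m' a = hfun m' b -> a = b) -> (forall y, hfun m' (i y) = hfun m y) -> is_hom M M' i.
Proof.
  intros Hinj Hi w. apply (Bmap_inj (hfun m') Hinj).
  rewrite Bmap_comp, <- hom_eq, Fmap_comp, (Fmap_ext _ (hfun m) w Hi), (Bmap_ext _ (hfun m) _ Hi).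
  apply hom_eq.
Qed.

Lemma part4 (D E : dialg) (h : hom D E)
          (M : dialg) (e : hom D M) (m : hom M E)
          (M' : dialg) (e' : hom D M') (m' : hom M' E) :
     (forall y, exists x, hfun e x = y) ->
     (forall a b, hfun m a = hfun m b -> a = b) ->
     (forall x, hfun m (hfun e x) = hfun h x) ->
     (forall y, exists x, hfun e' x = y) ->
     (forall a b, hfun m' a = hfun m' b -> a = b) ->
     (forall x, hfun m' (hfun e' x) = hfun h x) ->
     exists i : hom M M',
       dialg_iso i /\
       (forall x, hfun i (hfun e x) = hfun e' x) /\
       (forall y, hfun m' (hfun i y) = hfun m y).
Proof.
  intros He Hm Hem He' Hm' Hem'.
  pose (sel := fun y => proj1_sig (constructive_indefinite_description _ (He y))).
  assert (Hsel : forall y, hfun e (sel y) = y)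
    by (intro y; exact (proj2_sig (constructive_indefinite_description _ (He y)))).
  pose (sel' := fun y => proj1_sig (constructive_indefinite_description _ (He' y))).
  assert (Hsel' : forall y, hfun e' (sel' y) = y)
    by (intro y; exact (proj2_sig (constructive_indefinite_description _ (He' y)))).
  pose (i := fun y => hfun e' (sel y)).
  pose (j := fun y => hfun e (sel' y)).
  assert (Hi : forall y, hfun m' (i y) = hfun m y).
  { intro y. unfold i. rewrite Hem', <- Hem, Hsel. reflexivity. }
  assert (Hj : forall y, hfun m (j y) = hfun m' y).
  { intro y. unfold j. rewrite Hem, <- Hem', Hsel'. reflexivity. }
  exists (exist _ i (hom_of_inj M M' E m m' i Hm' Hi)). split; [|split].
  - exists (exist _ j (hom_of_inj M' M E m' m j Hm Hj)). simpl. split; intro y.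
    + apply Hm. rewrite Hj, Hi. reflexivity.
    + apply Hm'. rewrite Hi, Hj. reflexivity.
  - intro x. simpl. apply Hm'. rewrite Hi, Hem, Hem'. reflexivity.
  - exact Hi.
Qed.

Lemma dialg_epi_surj (D E : dialg) (e : hom D E) : dialg_epi e -> forall y, exists x, hfun e x = y.
Proof.
  intros He.
  pose (Mp := fun y => exists x, hfun e x = y).
  pose (v := fun y : car E => if excluded_middle_informative (Mp y) then @inl _ (car E) y else inr y).
  pose (u := fun y : car E => @inl (car E) (car E) y).
  assert (Hv_in : forall y, Mp y -> v y = inl y).
  { intros y H; unfold v; destruct (excluded_middle_informative _); tauto. }
  assert (Hv_l : forall y y', v y = inl y' -> y = y' /\ Mp y).
  { intros y y'; unfold v; destruct (excluded_middle_informative _); intro Hq; try discriminate.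
    injection Hq; auto. }
  assert (Hv_inj : forall a b, v a = v b -> a = b).
  { intros a b; unfold v; do 2 destruct (excluded_middle_informative _); intro Hq; try discriminate;
    injection Hq; auto. }
  assert (Himg : forall w, (exists w0, Fmap (hfun e) w0 = w) -> forall t, str E w t -> Mp t).
  { intros w [w0 <-] t Ht. rewrite hom_eq in Ht. destruct Ht as [x [_ Hx]]. exists x; exact Hx. }
  assert (Key : forall w w', Fmap u w = Fmap v w' -> w = w' /\ forall t, str E w t -> Mp t).
  { intros [y|[y1 y2]] [y'|[y1' y2']]; simpl; intro Eq; try discriminate.
    - injection Eq; intro E1. symmetry in E1. destruct (Hv_l _ _ E1) as [<- [x Hx]].
      split; [reflexivity|]. apply Himg. exists (inl x). simpl. rewrite Hx; reflexivity.
    - injection Eq; intros E2 E1. symmetry in E1, E2.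
      destruct (Hv_l _ _ E1) as [<- [x1 Hx1]]. destruct (Hv_l _ _ E2) as [<- [x2 Hx2]].
      split; [reflexivity|]. apply Himg. exists (inr (x1,x2)). simpl. rewrite Hx1, Hx2; reflexivity. }
  pose (Z := Dialg (car E + car E)
         (fun z t => (exists w, z = Fmap u w /\ Bmap u (str E w) t) \/
                     (exists w, z = Fmap v w /\ Bmap v (str E w) t))).
  assert (Hu : is_hom E Z u).
  { intro w. simpl. apply functional_extensionality; intro t; apply propositional_extensionality; split.
    - intros [[w' [Eq Ht]] | [w' [Eq Ht]]].
      + apply Fmap_inj in Eq; [subst; exact Ht|]. intros a b Hq; injection Hq; auto.
      + destruct (Key _ _ Eq) as [<- HS]. rewrite (Bmap_ext_on v u) in Ht; [exact Ht|].
        intros x Hx. apply Hv_in, HS, Hx.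
    - intro Ht; left; exists w; auto. }
  assert (Hv : is_hom E Z v).
  { intro w. simpl. apply functional_extensionality; intro t; apply propositional_extensionality; split.
    - intros [[w' [Eq Ht]] | [w' [Eq Ht]]].
      + symmetry in Eq. destruct (Key _ _ Eq) as [<- HS]. rewrite (Bmap_ext_on u v) in Ht; [exact Ht|].
        intros x Hx. symmetry; apply Hv_in, HS, Hx.
      + apply Fmap_inj in Eq; [subst; exact Ht|exact Hv_inj].
    - intro Ht; right; exists w; auto. }
  intro y.
  assert (Eq := He Z (exist _ u Hu) (exist _ v Hv)). simpl in Eq.
  assert (Ey : u y = v y).
  { apply Eq. intro x. symmetry. apply Hv_in. exists x; reflexivity. }
  unfold u, v in Ey. destruct (excluded_middle_informative (Mp y)) as [Hy|Hy]; [exact Hy|discriminate].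
Qed.

Definition eC (D : dialg) (C : quotient_class D) := hfun (epi_map (quotient_rep D C)).

Inductive bis (D : dialg) : car D -> car D -> Prop :=
| bis_gen : forall C x y, eC D C x = eC D C y -> bis D x y
| bis_refl : forall x, bis D x x
| bis_sym : forall x y, bis D x y -> bis D y x
| bis_trans : forall x y z, bis D x y -> bis D y z -> bis D x z.

Definition Pc (D : dialg) : Type := {S : car D -> Prop | exists x, S = bis D x}.
Definition pq (D : dialg) (x : car D) : Pc D := exist _ (bis D x) (ex_intro _ x eq_refl).

Lemma pq_eq D x y : pq D x = pq D y <-> bis D x y.
Proof.
  split.
  - intro H. injection H. intro E. assert (bis D y y) by apply bis_refl. rewrite <- E in H0. exact H0.
  - intro H. unfold pq. 
    assert (E : bis D x = bis D y).
    { apply functional_extensionality; intro z; apply propositional_extensionality; split; intro Hz.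
      - eapply bis_trans; [apply bis_sym; exact H|exact Hz].
      - eapply bis_trans; [exact H|exact Hz]. }
    revert E. generalize (ex_intro (fun x0 => bis D x = bis D x0) x eq_refl).
    generalize (ex_intro (fun x0 => bis D y = bis D x0) y eq_refl).
    intros e1 e2 E. revert e2. rewrite E. intro e2. f_equal. apply proof_irrelevance.
Qed.

Lemma pq_surj D : forall z, exists x, pq D x = z.
Proof. intros [S [x Hx]]. exists x. subst S. unfold pq. f_equal; apply proof_irrelevance. Qed.

Lemma eC_surj D C : forall y, exists x, eC D C x = y.
Proof. apply dialg_epi_surj. exact (proj2_sig (projT2 (quotient_rep D C))). Qed.

Definition Rq D (u u' : F (car D)) := Bmap (pq D) (str D u) = Bmap (pq D) (str D u').

Lemma Rq_gen D C u u' : Fmap (eC D C) u = Fmap (eC D C) u' -> Rq D u u'.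
Proof.
  intro H. unfold Rq.
  assert (H2 : Bmap (eC D C) (str D u) = Bmap (eC D C) (str D u')).
  { unfold eC in *. rewrite <- !hom_eq, H. reflexivity. }
  apply functional_extensionality; intro t; apply propositional_extensionality; split.
  - intros [a [Ha <-]].
    assert (Hb : Bmap (eC D C) (str D u') (eC D C a)) by (rewrite <- H2; exists a; auto).
    destruct Hb as [b [Hb Eb]]. exists b; split; auto. apply pq_eq. apply (bis_gen D C); auto.
  - intros [a [Ha <-]].
    assert (Hb : Bmap (eC D C) (str D u) (eC D C a)) by (rewrite H2; exists a; auto).
    destruct Hb as [b [Hb Eb]]. exists b; split; auto. apply pq_eq. apply (bis_gen D C); auto.
Qed.

Lemma Rq_inl D x x' : bis D x x' -> Rq D (inl x) (inl x').
Proof.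
  unfold Rq. induction 1.
  - apply (Rq_gen D C). simpl. rewrite H; reflexivity.
  - reflexivity.
  - symmetry; auto.
  - etransitivity; eauto.
Qed.

Lemma Rq_inr1 D a a' b : bis D a a' -> Rq D (inr (a,b)) (inr (a',b)).
Proof.
  unfold Rq. induction 1.
  - apply (Rq_gen D C). simpl. rewrite H; reflexivity.
  - reflexivity.
  - symmetry; auto.
  - etransitivity; eauto.
Qed.

Lemma Rq_inr2 D a b b' : bis D b b' -> Rq D (inr (a,b)) (inr (a,b')).
Proof.
  unfold Rq. induction 1.
  - apply (Rq_gen D C). simpl. rewrite H; reflexivity.
  - reflexivity.
  - symmetry; auto.
  - etransitivity; eauto.
Qed.

Lemma Rq_wd D u u' : Fmap (pq D) u = Fmap (pq D) u' -> Rq D u u'.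
Proof.
  destruct u as [x|[a b]], u' as [x'|[a' b']]; simpl; intro H; try discriminate.
  - assert (E : pq D x = pq D x') by congruence. apply Rq_inl, pq_eq, E.
  - assert (E1 : pq D a = pq D a') by congruence. assert (E2 : pq D b = pq D b') by congruence. unfold Rq. transitivity (Bmap (pq D) (str D (inr (a', b)))).
    + apply Rq_inr1, pq_eq, E1.
    + apply Rq_inr2, pq_eq, E2.
Qed.

Definition PD (D : dialg) : dialg :=
  Dialg (Pc D) (fun w t => exists u, Fmap (pq D) u = w /\ Bmap (pq D) (str D u) t).

Lemma pq_hom D : is_hom D (PD D) (pq D).
Proof.
  intro u. simpl. apply functional_extensionality; intro t; apply propositional_extensionality; split.
  - intros [u' [E Ht]]. rewrite (Rq_wd D u' u E) in Ht. exact Ht.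
  - intro Ht; exists u; auto.
Qed.

Definition cC D C (y : car (epi_tgt (quotient_rep D C))) : Pc D :=
  pq D (proj1_sig (constructive_indefinite_description _ (eC_surj D C y))).

Lemma cC_spec D C x : cC D C (eC D C x) = pq D x.
Proof.
  unfold cC. destruct (constructive_indefinite_description _ _) as [x' Hx']. simpl.
  apply pq_eq. apply (bis_gen D C). exact Hx'.
Qed.

Lemma cC_hom D C : is_hom (epi_tgt (quotient_rep D C)) (PD D) (cC D C).
Proof.
  intro v. destruct (Fmap_surj _ (eC_surj D C) v) as [u <-].
  rewrite Fmap_comp. erewrite Fmap_ext; [|intro x; apply cC_spec].
  etransitivity; [apply (pq_hom D u)|]. unfold eC. rewrite hom_eq, Bmap_comp.
  apply Bmap_ext. intro x. symmetry. apply (cC_spec D C x).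
Qed.

Lemma part5 D : has_bisim_quotient D.
Proof.
  exists (PD D), (exist _ (pq D) (pq_hom D)), (fun C => exist _ (cC D C) (cC_hom D C)).
  split.
  - intros C x. simpl. apply (cC_spec D C x).
  - intros Q q d Hd.
    assert (Hwd : forall x y, bis D x y -> hfun q x = hfun q y).
    { induction 1.
      - rewrite <- (Hd C x), <- (Hd C y). unfold eC in H. rewrite H. reflexivity.
      - reflexivity.
      - symmetry; auto.
      - etransitivity; eauto. }
    pose (uf := fun z => hfun q (proj1_sig (constructive_indefinite_description _ (pq_surj D z)))).
    assert (Huf : forall x, uf (pq D x) = hfun q x).
    { intro x. unfold uf. destruct (constructive_indefinite_description _ _) as [x' Hx']. simpl.
      apply Hwd. apply pq_eq. exact Hx'. }
    assert (Hh : is_hom (PD D) Q uf).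
    { intro w. destruct (Fmap_surj _ (pq_surj D) w) as [u0 <-].
      rewrite Fmap_comp, (Fmap_ext _ (hfun q) u0 Huf).
      transitivity (Bmap uf (Bmap (pq D) (str D u0))); [|f_equal; symmetry; apply pq_hom]. rewrite Bmap_comp, (Bmap_ext _ (hfun q) _ Huf). apply hom_eq. }
    exists (exist _ uf Hh). simpl. split; [|split].
    + exact Huf.
    + intros C y. destruct (eC_surj D C y) as [x <-]. rewrite cC_spec, Huf.
      symmetry. apply Hd.
    + intros u' Hu' _ z. destruct (pq_surj D z) as [x <-]. rewrite Hu', Huf. reflexivity.
Qed.

Theorem proposition4 :
  (forall (X Y : Type) (m : X -> Y),
     (X -> False) -> set_mono m -> set_mono (Fmap m) /\ set_mono (Bmap m)) /\
  (forall (I X : Type) (Y : I -> Type) (e : forall i, X -> Y i),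
     (forall i, set_epi (e i)) ->
     forall (P : Type) (p : X -> P) (c : forall i, Y i -> P),
       set_wide_pushout e P p c ->
       set_wide_pushout (fun i => Fmap (e i)) (F P) (Fmap p) (fun i => Fmap (c i))) /\
  (forall (D E : dialg) (h : hom D E),
     exists (M : dialg) (e : hom D M) (m : hom M E),
       (forall y, exists x, hfun e x = y) /\
       (forall a b, hfun m a = hfun m b -> a = b) /\
       (forall x, hfun m (hfun e x) = hfun h x)) /\
  (forall (D E : dialg) (h : hom D E)
          (M : dialg) (e : hom D M) (m : hom M E)
          (M' : dialg) (e' : hom D M') (m' : hom M' E),
     (forall y, exists x, hfun e x = y) ->
     (forall a b, hfun m a = hfun m b -> a = b) ->
     (forall x, hfun m (hfun e x) = hfun h x) ->
     (forall y, exists x, hfun e' x = y) ->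
     (forall a b, hfun m' a = hfun m' b -> a = b) ->
     (forall x, hfun m' (hfun e' x) = hfun h x) ->
     exists i : hom M M',
       dialg_iso i /\
       (forall x, hfun i (hfun e x) = hfun e' x) /\
       (forall y, hfun m' (hfun i y) = hfun m y)) /\
  (forall D : dialg, has_bisim_quotient D).
Proof.
  split; [exact part1|]. split; [exact part2|]. split; [exact part3|]. split; [exact part4|].
  exact part5.
Qed.
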